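(* A U-matroid $U=(E,\mathcal{D},\rho)$ is a poset matroid if and only if every basis of $U$ is an element of $\mathcal{D}$.
   Context: An accessible distributive lattice on finite $E$ is a family $\mathcal{D}\subseteq2^E$ containing $\emptyset,E$, closed under $\cup,\cap$, such that each nonempty $A\in\mathcal{D}$ has some $x$ with $A\setminus\{x\}\in\mathcal{D}$. A U-matroid is a triple $(E,\mathcal{D},\rho)$ with $\rho:\mathcal{D}\to\mathbb{N}$ satisfying $\rho(\emptyset)=0$; $\rho(A)\le\rho(B)$ for $A\subseteq B$; $\rho(A)+\rho(B)\ge\rho(A\cup B)+\rho(A\cap B)$; and $\rho(A\cup\{e\})-\rho(A)\le1$ whenever $A,A\cup\{e\}\in\mathcal{D}$. Its bases are the supports of the vertices of the base polyhedron $\{\mathbf{x}\in\mathbb{R}^E:\sum_{a\in A}x_a\le\rho(A)\ \forall A\in\mathcal{D},\ \sum_{e\in E}x_e=\rho(E)\}$. A poset matroid is a triple $(E,\mathcal{D},\rho)$ with $\mathcal{D}$ an accessible distributive lattice and $\rho:\mathcal{D}\to\mathbb{N}$ satisfying $\rho(\emptyset)=0$, monotonicity, unit increase, and the local chain property: whenever $A\in\mathcal{D}$, $b_1,b_2\in E$, $A_{12}=A\cup\{b_1,b_2\}\in\mathcal{D}$ and $\rho(A_{12})>\rho(A)$, there is $j\in\{1,2\}$ with $A\cup\{b_j\}\in\mathcal{D}$ and $\rho(A\cup\{b_j\})=\rho(A)+1$. *)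

(* Defs.v *)
From HB Require Import structures.
From mathcomp Require Import all_boot all_order all_algebra.
From mathcomp Require Import reals.
Set Implicit Arguments. Unset Strict Implicit. Unset Printing Implicit Defensive.
Import Order.TTheory GRing.Theory Num.Theory.

(* Ground set: a finite type E; D : family of subsets of E; rho : {set E} -> nat
   (only its values on members of D matter). *)

Definition accessible_distr_lattice (E : finType) (D : {set {set E}}) : Prop :=
  [/\ set0 \in D, setT \in D,
      (forall A B, A \in D -> B \in D -> A :|: B \in D),
      (forall A B, A \in D -> B \in D -> A :&: B \in D) &
      (forall A, A \in D -> A != set0 -> exists2 x, x \in A & A :\ x \in D)].

Definition is_Umatroid (E : finType) (D : {set {set E}}) (rho : {set E} -> nat) : Prop :=
  [/\ accessible_distr_lattice D,
      rho set0 = 0%N,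
      (forall A B, A \in D -> B \in D -> A \subset B -> (rho A <= rho B)%N),
      (forall A B, A \in D -> B \in D ->
         (rho (A :|: B) + rho (A :&: B) <= rho A + rho B)%N) &
      (forall A e, A \in D -> e |: A \in D -> (rho (e |: A) - rho A <= 1)%N)].

Local Open Scope ring_scope.

Definition base_polyhedron (R : realType) (E : finType) (D : {set {set E}})
    (rho : {set E} -> nat) (x : E -> R) : Prop :=
  (forall A, A \in D -> \sum_(a in A) x a <= (rho A)%:R) /\
  \sum_(e : E) x e = (rho setT)%:R.

Definition is_vertex (R : realType) (E : finType) (P : (E -> R) -> Prop)
    (x : E -> R) : Prop :=
  P x /\
  forall (y z : E -> R) (t : R), P y -> P z -> 0 < t -> t < 1 ->
    (forall e, x e = t * y e + (1 - t) * z e) -> y = z.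

Definition support (R : realType) (E : finType) (x : E -> R) : {set E} :=
  [set e | x e != 0].

Definition is_basis (R : realType) (E : finType) (D : {set {set E}})
    (rho : {set E} -> nat) (B : {set E}) : Prop :=
  exists x : E -> R, @is_vertex R E (@base_polyhedron R E D rho) x /\ B = support x.

Local Close Scope ring_scope.

Definition is_poset_matroid (E : finType) (D : {set {set E}}) (rho : {set E} -> nat) : Prop :=
  [/\ accessible_distr_lattice D,
      rho set0 = 0%N,
      (forall A B, A \in D -> B \in D -> A \subset B -> (rho A <= rho B)%N),
      (forall A e, A \in D -> e |: A \in D -> (rho (e |: A) - rho A <= 1)%N) &
      (forall A (b1 b2 : E), A \in D -> b1 |: (b2 |: A) \in D ->
         (rho A < rho (b1 |: (b2 |: A)))%N ->
         (b1 |: A \in D /\ rho (b1 |: A) = (rho A).+1) \/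
         (b2 |: A \in D /\ rho (b2 |: A) = (rho A).+1))].

(* Main.v *)
Require Import Defs.
From HB Require Import structures.
From mathcomp Require Import all_boot all_order all_algebra.
From mathcomp Require Import reals boolp.
From mathcomp Require Import ring lra.
Set Implicit Arguments. Unset Strict Implicit. Unset Printing Implicit Defensive.
Import Order.TTheory GRing.Theory Num.Theory.

Section Comb.
Variables (E : finType) (D : {set {set E}}).
Hypothesis HD : accessible_distr_lattice D.

Lemma DU A B : A \in D -> B \in D -> A :|: B \in D.
Proof. by case: HD => _ _ H1 _ _; apply: H1. Qed.
Lemma DI A B : A \in D -> B \in D -> A :&: B \in D.
Proof. by case: HD => _ _ _ H1 _; apply: H1. Qed.

Lemma down_step n : forall S G : {set E}, #|G| <= n -> S \in D -> G \in D -> S \proper G ->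
  exists2 f, f \in G :\: S & G :\ f \in D.
Proof.
elim: n => [|n IH] S G HG SD GD SG.
  move: HG; rewrite leqn0 cards_eq0 => /eqP G0.
  by move: SG; rewrite G0 => /andP[]; rewrite subset0 => /eqP->; rewrite sub0set.
have Gn0 : G != set0.
  apply/eqP=> G0; move: SG; rewrite G0 => /andP[]; rewrite subset0 => /eqP->.
  by rewrite sub0set.
case: HD => _ _ _ _ /(_ G GD Gn0) [f0 f0G Gf0D].
case: (boolP (f0 \in S)) => f0S; last first.
  by exists f0 => //; rewrite inE f0S f0G.
have SfD : S :\ f0 \in D.
  have -> : S :\ f0 = S :&: (G :\ f0).
    apply/setP=> y; rewrite !inE; case: (y == f0) => //=;
    case yS : (y \in S) => //=;
    by move/proper_sub/subsetP: SG => /(_ y yS) ->.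
  exact: DI.
have SGp : S :\ f0 \proper G :\ f0.
  move/properP: SG => [sSG [z zG zS]].
  apply/properP; split; first by apply: setSD.
  exists z; first by rewrite !inE zG andbT; apply/eqP=> E0; move: zS; rewrite E0 f0S.
  by rewrite !inE (negbTE zS) andbF.
have HG' : #|G :\ f0| <= n.
  by move: HG; rewrite (cardsD1 f0 G) f0G.
have [f fG fGD] := IH _ _ HG' SfD Gf0D SGp.
move: fG; rewrite !inE => /andP[fS /andP[ff0 fG]].
rewrite ff0 /= in fS.
exists f; first by rewrite !inE fS fG.
have -> : G :\ f = (G :\ f0 :\ f) :|: S.
  apply/setP=> y; rewrite !inE.
  case: (boolP (y == f)) => [/eqP->|yf] /=; first by rewrite (negbTE fS).
  case: (boolP (y == f0)) => [/eqP->|yf0] /=; first by rewrite f0S f0G.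
  case yS : (y \in S); rewrite ?orbT ?orbF //.
  by move/proper_sub/subsetP: SG => /(_ y yS) ->.
exact: DU.
Qed.

Lemma down S G : S \in D -> G \in D -> S \proper G ->
  exists2 f, f \in G :\: S & G :\ f \in D.
Proof. exact: (@down_step #|G|). Qed.


Definition chainD (S : {set E}) (t : seq E) (G : {set E}) :=
  [/\ uniq t, S :|: [set y in t] = G, (forall y, y \in t -> y \notin S) &
      (forall k, S :|: [set y in take k t] \in D)].

Lemma chain_nil G : G \in D -> chainD G [::] G.
Proof.
move=> GD; split => //.
- by apply/setP=> y; rewrite !inE ?orbF.
- by move=> k; have -> : G :|: [set y in take k [::]] = G by apply/setP=> y; rewrite !inE ?orbF.
Qed.

Lemma chain1 G b : G \in D -> b \notin G -> b |: G \in D -> chainD G [:: b] (b |: G).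
Proof.
move=> GD bG bGD; split => //.
- by apply/setP=> y; rewrite !inE ?orbF orbC.
- by move=> y; rewrite inE => /eqP->.
- case=> [|k].
  + by have -> : G :|: [set y in take 0 [:: b]] = G by apply/setP=> y; rewrite !inE ?orbF.
  + by have -> : G :|: [set y in take k.+1 [:: b]] = b |: G
      by apply/setP=> y; rewrite !inE ?orbF orbC.
Qed.

Lemma chain_sub S t G : chainD S t G -> S \subset G.
Proof. by case=> _ <- _ _; apply: subsetUl. Qed.

Lemma chain_cat S t1 G t2 H : chainD S t1 G -> chainD G t2 H -> chainD S (t1 ++ t2) H.
Proof.
move=> c1; have SG := chain_sub c1; case: c1 => u1 e1 d1 p1 [u2 e2 d2 p2].
have inG y : y \in t1 -> y \in G by move=> yt; rewrite -e1 !inE yt orbT.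
split.
- rewrite cat_uniq u1 u2 andbT /=; apply/hasPn => y /d2 yG.
  by apply/negP => /inG; rewrite (negbTE yG).
- rewrite -e2 -e1; apply/setP=> y; rewrite !inE mem_cat; by case: (y \in S); case: (y \in t1).
- move=> y; rewrite mem_cat => /orP[/d1 //| /d2 yG].
  by apply/negP => yS; move/subsetP: SG => /(_ y yS); rewrite (negbTE yG).
- move=> k; rewrite take_cat; case: ifP => _; first exact: p1.
  have := p2 (k - size t1); rewrite -e1.
  have -> : S :|: [set y in t1] :|: [set y in take (k - size t1) t2] =
            S :|: [set y in t1 ++ take (k - size t1) t2].
    by apply/setP=> y; rewrite !inE mem_cat orbA.
  by [].
Qed.

Lemma chain_ex_step n : forall S G : {set E}, #|G| <= n -> S \in D -> G \in D -> S \subset G ->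
  exists t, chainD S t G.
Proof.
elim: n => [|n IH] S G HG SD GD SG.
  exists [::]; move: HG; rewrite leqn0 cards_eq0 => /eqP G0.
  by move: SG; rewrite G0 subset0 => /eqP->; apply: chain_nil; rewrite -G0.
case: (eqVneq S G) => [->|SnG]; first by exists [::]; apply: chain_nil.
have SGp : S \proper G by rewrite properEneq SnG SG.
have [f fG GfD] := down SD GD SGp.
move: fG; rewrite inE => /andP[fS fG].
have HG' : #|G :\ f| <= n by move: HG; rewrite (cardsD1 f G) fG.
have SGf : S \subset G :\ f.
  apply/subsetP=> y yS; rewrite !inE (subsetP SG y yS) andbT.
  by apply/eqP=> yf; move: fS; rewrite -yf yS.
have [t ct] := IH _ _ HG' SD GfD SGf.
exists (t ++ [:: f]); apply: chain_cat ct _.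
have h := @chain1 (G :\ f) f GfD.
rewrite setD1K // in h; apply: h => //.
by rewrite !inE eqxx.
Qed.

Lemma chain_ex S G : S \in D -> G \in D -> S \subset G -> exists t, chainD S t G.
Proof. exact: (@chain_ex_step #|G|). Qed.


Variable rho : {set E} -> nat.
Hypothesis Hmono : forall A B, A \in D -> B \in D -> A \subset B -> rho A <= rho B.
Hypothesis Hunit : forall A e, A \in D -> e |: A \in D -> rho (e |: A) - rho A <= 1.
Hypothesis Hloc : forall A (b1 b2 : E), A \in D -> b1 |: (b2 |: A) \in D ->
         rho A < rho (b1 |: (b2 |: A)) ->
         (b1 |: A \in D /\ rho (b1 |: A) = (rho A).+1) \/
         (b2 |: A \in D /\ rho (b2 |: A) = (rho A).+1).

Lemma lemL_step n e : forall S G : {set E}, #|G| <= n -> S \in D -> G \in D -> S \subset G ->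
  rho S = rho G -> e \notin G -> e |: G \in D -> rho (e |: G) = (rho G).+1 ->
  e |: S \in D /\ rho (e |: S) = (rho S).+1.
Proof.
elim: n => [|n IH] S G HG SD GD SG rSG eG eGD reG.
  move: HG; rewrite leqn0 cards_eq0 => /eqP G0.
  by move: SG; rewrite G0 subset0 => /eqP eS; rewrite eS -G0.
case: (eqVneq S G) => [eSG|SnG]; first by rewrite eSG.
have SGp : S \proper G by rewrite properEneq SnG SG.
have [f fG GfD] := down SD GD SGp.
move: fG; rewrite inE => /andP[fS fG].
have HG' : #|G :\ f| <= n by move: HG; rewrite (cardsD1 f G) fG.
have SGf : S \subset G :\ f.
  apply/subsetP=> y yS; rewrite !inE (subsetP SG y yS) andbT.
  by apply/eqP=> yf; move: fS; rewrite -yf yS.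
have r1 := Hmono SD GfD SGf.
have r2 := Hmono GfD GD (subD1set G f).
have rA : rho (G :\ f) = rho G by apply/eqP; rewrite eqn_leq r2 -rSG r1.
have eGf : e \notin G :\ f by rewrite !inE negb_and eG orbT.
have := @Hloc (G :\ f) e f GfD; rewrite setD1K // => /(_ eGD).
rewrite reG rA ltnSn => /(_ isT) [[eAD reA]|[_]]; last first.
  by move=> h; case: (n_Sn _ h).
apply: (IH S (G :\ f)) => //; by rewrite ?rA.

Qed.

End Comb.

Section Real.
Local Open Scope ring_scope.
Variables (R : realType) (E : finType) (D : {set {set E}}) (rho : {set E} -> nat).
Hypothesis HU : is_Umatroid D rho.

Let HD : accessible_distr_lattice D. Proof. by case: HU. Qed.
Let rho0 : rho set0 = 0%N. Proof. by case: HU. Qed.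
Let Hsub A B : A \in D -> B \in D -> (rho (A :|: B) + rho (A :&: B) <= rho A + rho B)%N.
Proof. by case: HU => _ _ _ H _; apply: H. Qed.
Let Hmono A B : A \in D -> B \in D -> A \subset B -> (rho A <= rho B)%N.
Proof. by case: HU => _ _ H _ _; apply: H. Qed.
Let Hunit A e : A \in D -> e |: A \in D -> (rho (e |: A) - rho A <= 1)%N.
Proof. by case: HU => _ _ _ _ H; apply: H. Qed.

Notation P := (@base_polyhedron R E D rho).

Lemma sum_UI (x : E -> R) A B :
  \sum_(a in A :|: B) x a + \sum_(a in A :&: B) x a = \sum_(a in A) x a + \sum_(a in B) x a.
Proof.
rewrite !(big_mkcond (fun a => a \in _)) -!big_split /=; apply: eq_bigr => a _.
rewrite !inE; case: (a \in A); case: (a \in B) => /=; rewrite ?addr0 ?add0r //.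
Qed.

Lemma sum_setT (x : E -> R) : \sum_(a in [set: E]) x a = \sum_a x a.
Proof. by apply: eq_bigl => a; rewrite inE. Qed.

Definition tight (x : E -> R) A := (A \in D) && (\sum_(a in A) x a == (rho A)%:R).

Lemma tightUI x A B : P x -> tight x A -> tight x B -> tight x (A :|: B) && tight x (A :&: B).
Proof.
case=> Px _ /andP[AD /eqP xA] /andP[BD /eqP xB].
have UD := DU HD AD BD; have ID := DI HD AD BD.
have h1 := Px _ UD; have h2 := Px _ ID; have h3 := Hsub AD BD.
have e := sum_UI x A B.
rewrite /tight UD ID /=.
have h3' : (rho (A :|: B))%:R + (rho (A :&: B))%:R <= (rho A)%:R + (rho B)%:R :> R.
  by rewrite -!natrD ler_nat.
apply/andP; split; apply/eqP; lra.
Qed.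

Lemma tight0 x : tight x set0.
Proof. by case: HD => H0 *; rewrite /tight big_set0 rho0 H0 eqxx. Qed.

Lemma tightT x : P x -> tight x setT.
Proof. by case=> _ h; case: HD => _ HT *; rewrite /tight sum_setT h eqxx HT. Qed.

Lemma eps_common (T : eqType) (s : seq T) (Q : T -> R -> Prop) :
  (forall A, A \in s -> exists2 e0 : R, 0 < e0 & forall e, 0 < e -> e <= e0 -> Q A e) ->
  exists2 e0 : R, 0 < e0 & forall A, A \in s -> forall e, 0 < e -> e <= e0 -> Q A e.
Proof.
elim: s => [|a s IH] H; first by exists 1.
have [e1 e1p H1] := H a (mem_head _ _).
have [e2 e2p H2] : exists2 e0 : R, 0 < e0 & forall A, A \in s -> forall e, 0 < e -> e <= e0 -> Q A e.
  by apply: IH => A As; apply: H; rewrite inE As orbT.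
exists (Order.min e1 e2); first by rewrite lt_min e1p e2p.
move=> A; rewrite inE => /orP[/eqP->|As] e ep; rewrite le_min => /andP[h1 h2].
  exact: H1.
exact: H2.
Qed.

Lemma vertex_perturb x : is_vertex P x ->
  forall d : E -> R, (forall A, tight x A -> \sum_(a in A) d a = 0) -> forall a, d a = 0.
Proof.
case=> Px Hv d Hd.
pose Q (A : {set E}) (e : R) := \sum_(a in A) x a + e * \sum_(a in A) d a <= (rho A)%:R /\
                                \sum_(a in A) x a - e * \sum_(a in A) d a <= (rho A)%:R.
have [e0 e0p He] : exists2 e0 : R, 0 < e0 & forall A, A \in enum D -> forall e, 0 < e -> e <= e0 -> Q A e.
  apply: eps_common => A; rewrite mem_enum => AD.
  case: (boolP (tight x A)) => tA.
    exists 1 => // e _ _; rewrite /Q (Hd _ tA) mulr0 addr0 subr0.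
    by move: tA => /andP[_ /eqP->].
  have xA := (proj1 Px) A AD.
  have slack : \sum_(a in A) x a < (rho A)%:R.
    by rewrite lt_neqAle xA andbT; move: tA; rewrite /tight AD.
  set dA := \sum_(a in A) d a in slack *; set xs := \sum_(a in A) x a in slack xA *.
  exists (((rho A)%:R - xs) / (`|dA| + 1)).
    by apply: divr_gt0; [rewrite subr_gt0 | rewrite ltr_wpDl].
  move=> e ep; rewrite ler_pdivlMr ?ltr_wpDl // => he.
  have n1 : dA <= `|dA| := ler_norm dA.
  have n2 : - dA <= `|dA| by rewrite -normrN ler_norm.
  have m1 : e * dA <= e * `|dA| by rewrite ler_wpM2l // ltW.
  have m2 : e * (- dA) <= e * `|dA| by rewrite ler_wpM2l // ltW.
  rewrite mulrN in m2; rewrite mulrDr mulr1 in he.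
  rewrite /Q; rewrite -/dA -/xs; split; lra.
move: (tightT Px) => /andP[TD _].
pose y a := x a + e0 * d a; pose z a := x a - e0 * d a.
have sy A : \sum_(a in A) y a = \sum_(a in A) x a + e0 * \sum_(a in A) d a.
  by rewrite big_split /= mulr_sumr.
have sz A : \sum_(a in A) z a = \sum_(a in A) x a - e0 * \sum_(a in A) d a.
  by rewrite big_split /= mulr_sumr sumrN.
have dT : \sum_(a in [set: E]) d a = 0 by apply: Hd; apply: tightT.
have Py : P y.
  split; first by move=> A AD; rewrite sy; case: (He A _ e0 e0p (lexx _)); rewrite ?mem_enum.
  by rewrite -sum_setT sy dT mulr0 addr0 sum_setT (proj2 Px).
have Pz : P z.
  split; first by move=> A AD; rewrite sz; case: (He A _ e0 e0p (lexx _)); rewrite ?mem_enum.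
  by rewrite -sum_setT sz dT mulr0 subr0 sum_setT (proj2 Px).
have yz : y = z.
  apply: (Hv y z (1/2) Py Pz); [lra | lra | move=> a; rewrite /y /z; lra].
move=> a; have := congr1 (fun f => f a) yz; rewrite /y /z => h.
have : e0 * d a = 0 by lra.
by move/eqP; rewrite mulf_eq0 gt_eqF //= => /eqP.
Qed.


Lemma sum_ind (L : {set E}) (e : E) : \sum_(a in L) ((a == e)%:R : R) = (e \in L)%:R.
Proof.
case: (boolP (e \in L)) => eL.
  rewrite (big_setD1 e eL) /= eqxx big1 ?addr0 // => a; rewrite !inE => /andP[ae _].
  by rewrite (negbTE ae).
rewrite big1 ?mulr0n // => a aL; case: eqP => // ae; by move: aL; rewrite ae (negbTE eL).
Qed.

Lemma sep x : is_vertex P x -> forall e f, e != f ->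
  exists L, tight x L && ((e \in L) != (f \in L)).
Proof.
move=> Vx e f ef.
case: (boolP [exists L, tight x L && ((e \in L) != (f \in L))]) => [/existsP[L h]|H].
  by exists L.
exfalso; move/existsPn: H => H.
pose d a : R := (a == e)%:R - (a == f)%:R.
have := vertex_perturb Vx (d := d) _ e.
rewrite /d eqxx (negbTE ef) subr0 => h.
have : (1 : R) = 0; last by move/eqP; rewrite oner_eq0.
apply: h => A tA; rewrite sumrB !sum_ind.
by move: (H A); rewrite tA /= negbK => /eqP->; rewrite subrr.
Qed.

Lemma tight_descent x : is_vertex P x -> forall C, tight x C -> C != set0 ->
  exists2 e, e \in C & tight x (C :\ e).
Proof.
move=> Vx C tC Cn0.
have Px := proj1 Vx.
pose Pk K := tight x K && (K \proper C).
have P0 : Pk set0 by rewrite /Pk tight0 proper0.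
case: (@arg_maxnP _ set0 Pk (fun K : {set E} => #|K|) P0) => K /andP[tK KC] Kmax.
have [e eC eK] : exists2 e, e \in C & e \notin K.
  by move/properP: KC => [_ [e eC eK]]; exists e.
case: (eqVneq (C :\ e) K) => [CeK|CeK]; first by exists e; rewrite ?CeK.
have KCe : K \subset C :\ e.
  apply/subsetP=> y yK; rewrite !inE (subsetP (proper_sub KC) y yK) andbT.
  by apply/eqP=> ye; move: eK; rewrite -ye yK.
have [f fCe fK] : exists2 f, f \in C :\ e & f \notin K.
  have : K \proper C :\ e by rewrite properEneq eq_sym CeK KCe.
  by move/properP => [_ [f fC fK]]; exists f.
move: fCe; rewrite !inE => /andP[fe fC].
have ef : e != f by rewrite eq_sym.
have [L /andP[tL sepL]] := sep Vx ef.
set K' := K :|: (L :&: C).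
have tLC : tight x (L :&: C) by case/andP: (tightUI Px tL tC).
have tK' : tight x K' by case/andP: (tightUI Px tK tLC).
have K'C : K' \subset C.
  by apply/subsetP=> y; rewrite !inE => /orP[/(subsetP (proper_sub KC))//|/andP[]].
have [[g gK' gK] [h hC hK']] : (exists2 g, g \in K' & g \notin K) /\ (exists2 h, h \in C & h \notin K').
  move: sepL; case eL : (e \in L); case fL : (f \in L) => // _.
    split; first by exists e => //; rewrite !inE eL eC orbT.
    by exists f => //; rewrite !inE fL (negbTE fK).
  split; first by exists f => //; rewrite !inE fL fC orbT.
  by exists e => //; rewrite !inE eL (negbTE eK).
have PK' : Pk K' by rewrite /Pk tK'; apply/properP; split => //; exists h.
have := Kmax _ PK'.
have : K \proper K' by apply/properP; split; [apply: subsetUl | exists g].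
by move=> /proper_card lt le; move: (leq_ltn_trans le lt); rewrite ltnn.
Qed.


Lemma supp_tight
  (Hloc : forall A (b1 b2 : E), A \in D -> b1 |: (b2 |: A) \in D ->
         (rho A < rho (b1 |: (b2 |: A)))%N ->
         (b1 |: A \in D /\ rho (b1 |: A) = (rho A).+1) \/
         (b2 |: A \in D /\ rho (b2 |: A) = (rho A).+1))
  x : is_vertex P x -> forall n (C : {set E}), (#|C| <= n)%N -> tight x C ->
  ([set a | x a != 0] :&: C \in D) /\ rho ([set a | x a != 0] :&: C) = rho C.
Proof.
move=> Vx; elim=> [|n IH] C HC tC.
  move: HC; rewrite leqn0 cards_eq0 => /eqP->; rewrite setI0.
  by split => //; case: HD.
case: (eqVneq C set0) => [->|Cn0].
  by rewrite setI0; split => //; case: HD.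
have [e eC tG] := tight_descent Vx tC Cn0.
set G := C :\ e in tG *.
have HG : (#|G| <= n)%N by move: HC; rewrite (cardsD1 e C) eC.
have [SD rS] := IH G HG tG.
set S := [set a | x a != 0] :&: G in SD rS *.
move: (tC) (tG) => /andP[CD /eqP xC] /andP[GD /eqP xG].
have CeG : C = e |: G by rewrite setD1K.
have eG : e \notin G by rewrite !inE eqxx.
rewrite (big_setD1 e eC) /= -/G xG in xC.
have r1 : (rho G <= rho C)%N by apply: Hmono => //; apply: subD1set.
have r2 : (rho C <= (rho G).+1)%N.
  have := Hunit GD (e := e); rewrite -CeG => /(_ CD).
  by rewrite leq_subLR addnC.

have [rC|rC] : rho C = rho G \/ rho C = (rho G).+1.
  by case: (ltngtP (rho G) (rho C)) => [h|h|h]; [right; apply/eqP; rewrite eqn_leq r2 | by move: h; rewrite ltnNge r1 | left].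
- have xe : x e = 0 by move: xC; rewrite rC; lra.
  have -> : [set a | x a != 0] :&: C = S.
    apply/setP=> a; rewrite !inE; case: (eqVneq a e) => [->|ae] /=.
      by rewrite xe eqxx.
    by [].
  by rewrite rC.
- have xe : x e = 1 by move: xC; rewrite rC -addn1 natrD; lra.
  have -> : [set a | x a != 0] :&: C = e |: S.
    apply/setP=> a; rewrite !inE; case: (eqVneq a e) => [->|ae] /=.
      by rewrite xe oner_eq0 eC.
    by [].
  have h := @lemL_step _ _ HD rho Hmono Hloc #|G| e S G (leqnn _) SD GD (subsetIr _ _) rS eG.
  rewrite -CeG in h; have [h1 h2] := h CD rC.
  by rewrite h1 h2 rS rC.
Qed.


Section Greedy.
Variable s : seq E.
Hypothesis Hs : chainD D set0 s setT.

Let pre k := [set y in take k s].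
Definition xg (e : E) : R := (rho (pre (index e s).+1))%:R - (rho (pre (index e s)))%:R.

Let us : uniq s. Proof. by case: Hs. Qed.
Let preD k : pre k \in D. Proof. by case: Hs => _ _ _ h; move: (h k); rewrite set0U. Qed.
Let allS e : e \in s.
Proof. by case: Hs => _ h _ _; move/setP: h => /(_ e); rewrite !inE. Qed.

Lemma pre_step k y0 : (k < size s)%N ->
  pre k.+1 = nth y0 s k |: pre k /\ nth y0 s k \notin pre k.
Proof.
move=> ks; rewrite /pre (take_nth y0 ks); split.
  by apply/setP=> y; rewrite !inE mem_rcons in_cons.
have := take_uniq k.+1 us; rewrite (take_nth y0 ks) rcons_uniq => /andP[h _].
by rewrite inE.
Qed.

Lemma xg_nth k y0 : (k < size s)%N -> xg (nth y0 s k) = (rho (pre k.+1))%:R - (rho (pre k))%:R.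
Proof. by move=> ks; rewrite /xg index_uniq. Qed.

Lemma pre0 : pre 0 = set0.
Proof. by apply/setP=> y; rewrite !inE take0. Qed.

Lemma preT : pre (size s) = setT.
Proof. by apply/setP=> y; rewrite !inE take_size allS. Qed.

Lemma sum_pre k : (k <= size s)%N -> \sum_(a in pre k) xg a = (rho (pre k))%:R.
Proof.
elim: k => [|k IH] Hk; first by rewrite pre0 big_set0 rho0.
have ks : (k < size s)%N by [].
have y0 : E by move: ks; case: (s) => [|y t] //; exact: (fun=> y).
have [pk nk] := pre_step y0 ks.
rewrite pk big_setU1 //= xg_nth // (IH (ltnW ks)) -pk.
by rewrite subrK.
Qed.

Lemma sum_prefix u v : s = u ++ v -> \sum_(a in [set y in u]) xg a = (rho [set y in u])%:R.
Proof.
move=> suv; have := sum_pre (k := size u); rewrite /pre suv take_size_cat //.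
by apply; rewrite size_cat leq_addr.
Qed.

Lemma feasible S : S \in D -> forall k, (k <= size s)%N ->
  \sum_(a in S :&: pre k) xg a <= (rho (S :&: pre k))%:R.
Proof.
move=> SD; elim=> [|k IH] Hk; first by rewrite pre0 setI0 big_set0 rho0.
have ks : (k < size s)%N by [].
have y0 : E by move: ks; case: (s) => [|y t] //; exact: (fun=> y).
have [pk nk] := pre_step y0 ks.
set a := nth y0 s k in pk nk.
have IH' := IH (ltnW ks).
case: (boolP (a \in S)) => aS; last first.
  have -> : S :&: pre k.+1 = S :&: pre k.
    rewrite pk; apply/setP=> y; rewrite !(in_setI, in_setU1, in_setU); case: (eqVneq y a) => [->|_] /=.
      by rewrite (negbTE aS) (negbTE nk).
    by [].
  exact: IH'.
have e1 : S :&: pre k.+1 = a |: (S :&: pre k).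
  rewrite pk; apply/setP=> y; rewrite !(in_setI, in_setU1, in_setU); case: (eqVneq y a) => [->|_] //=.
  by rewrite aS.
have anS : a \notin S :&: pre k by rewrite inE (negbTE nk) andbF.
have e2 : (S :&: pre k.+1) :|: pre k = pre k.+1.
  rewrite e1 pk; apply/setP=> y; rewrite !(in_setI, in_setU1, in_setU); case: (eqVneq y a) => [->|_] //=.
  by case: (y \in S); case: (y \in pre k).
have e3 : (S :&: pre k.+1) :&: pre k = S :&: pre k.
  rewrite e1; apply/setP=> y; rewrite !(in_setI, in_setU1, in_setU); case: (eqVneq y a) => [->|_] /=;
  by [rewrite (negbTE nk) !andbF | case: (y \in S); case: (y \in pre k)].
have hs := Hsub (DI HD SD (preD k.+1)) (preD k).
rewrite e2 e3 in hs.
have hs' : (rho (pre k.+1))%:R + (rho (S :&: pre k))%:R <=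
           (rho (S :&: pre k.+1))%:R + (rho (pre k))%:R :> R.
  by rewrite -!natrD ler_nat.
rewrite e1 big_setU1 //= -e1 xg_nth // -/a.
lra.
Qed.

Lemma xg_P : P xg.
Proof.
split.
  move=> S SD; have := feasible SD (leqnn (size s)); by rewrite preT setIT.
by rewrite -sum_setT -preT sum_pre // preT.
Qed.

Lemma xg_vertex : is_vertex P xg.
Proof.
split; first exact: xg_P.
move=> y z t Py Pz t0 t1 Hx.
have tightyz k : (k <= size s)%N ->
   \sum_(a in pre k) y a = (rho (pre k))%:R /\ \sum_(a in pre k) z a = (rho (pre k))%:R.
  move=> ks; have := sum_pre ks.
  have -> : \sum_(a in pre k) xg a = t * \sum_(a in pre k) y a + (1 - t) * \sum_(a in pre k) z a.
    by rewrite !mulr_sumr -big_split; apply: eq_bigr => a _; rewrite Hx.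
  have hy := (proj1 Py) _ (preD k); have hz := (proj1 Pz) _ (preD k).
  move=> h.
  have a1 : t * \sum_(a in pre k) y a <= t * (rho (pre k))%:R by rewrite ler_wpM2l // ltW.
  have a2 : (1 - t) * \sum_(a in pre k) z a <= (1 - t) * (rho (pre k))%:R.
    by rewrite ler_wpM2l // subr_ge0 ltW.
  have b1 : t * \sum_(a in pre k) y a = t * (rho (pre k))%:R by lra.
  have b2 : (1 - t) * \sum_(a in pre k) z a = (1 - t) * (rho (pre k))%:R by lra.
  split; [apply: (mulfI (x := t)) | apply: (mulfI (x := 1 - t))] => //.
  - by rewrite gt_eqF.
  - by rewrite gt_eqF // subr_gt0.
apply: funext => e.
have es := allS e.
set k := index e s.
have ks : (k < size s)%N by rewrite index_mem.
have [pk nk] := pre_step e ks.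
rewrite nth_index // in pk nk.
have [y1 z1] := tightyz _ ks; have [y2 z2] := tightyz _ (ltnW ks).
move: y1 z1; rewrite pk !big_setU1 //= -pk y2 z2 => y1 z1.
lra.
Qed.

End Greedy.

End Real.
Lemma unit_eq (E : finType) (D : {set {set E}}) (rho : {set E} -> nat) A b :
  is_Umatroid D rho -> A \in D -> b |: A \in D -> rho A < rho (b |: A) ->
  rho (b |: A) = (rho A).+1.
Proof.
case=> _ _ _ _ Hu AD bAD lt; have := Hu A b AD bAD; rewrite leq_subLR addnC => h.
by apply/eqP; rewrite eqn_leq h lt.
Qed.

Lemma back_helper (R : realType) (E : finType) (D : {set {set E}}) (rho : {set E} -> nat)
  (HU : is_Umatroid D rho)
  (Hb : forall B : {set E}, @is_basis R E D rho B -> B \in D)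
  A bj bo : A \in D -> bj \notin A -> bo \notin A -> bj != bo ->
  bj |: A \in D -> bo |: (bj |: A) \in D -> rho A < rho (bo |: (bj |: A)) ->
  (bj |: A \in D /\ rho (bj |: A) = (rho A).+1) \/
  (bo |: A \in D /\ rho (bo |: A) = (rho A).+1).
Proof.
move=> AD bjA boA bjo bjAD A12D lt.
have HU' := HU; case: HU' => HD _ Hmono Hsub Hunit.
set A12 := bo |: (bj |: A) in A12D lt *.
have r1 : rho A <= rho (bj |: A) by apply: Hmono => //; apply: subsetUr.
case: (ltnP (rho A) (rho (bj |: A))) => [h|h].
  by left; split => //; apply: (unit_eq HU AD bjAD h).
have rj : rho (bj |: A) = rho A by apply/eqP; rewrite eqn_leq h r1.
have rA12 : rho A12 = (rho (bj |: A)).+1 by apply: (unit_eq HU bjAD A12D); rewrite rj.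
have S0D : set0 \in D by case: HD.
have [t1 c1] := chain_ex HD S0D AD (sub0set _).
have c2 := chain1 AD bjA bjAD.
have bojA : bo \notin bj |: A by rewrite !inE negb_or boA andbT eq_sym.
have c3 := chain1 bjAD bojA A12D.
have TD : setT \in D by case: HD.
have [t3 c4] := chain_ex HD A12D TD (subsetT _).
have Hs := chain_cat c1 (chain_cat c2 (chain_cat c3 c4)).
set s := t1 ++ [:: bj] ++ [:: bo] ++ t3 in Hs.
have Vx := @xg_vertex R E D rho HU s Hs.
set x := xg R rho s in Vx.
have BD : [set e | x e != 0%R] \in D by apply: Hb; exists x; split.
have eA : [set y in t1] = A by case: c1 => _ <- _ _; rewrite set0U.
have s1 := @sum_prefix R E D rho HU s Hs t1 ([:: bj] ++ [:: bo] ++ t3) erefl.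
have q2 : s = (t1 ++ [:: bj]) ++ ([:: bo] ++ t3) by rewrite /s catA.
have q3 : s = (t1 ++ [:: bj] ++ [:: bo]) ++ t3 by rewrite /s !catA.
have s2 := @sum_prefix R E D rho HU s Hs _ _ q2.
have s3 := @sum_prefix R E D rho HU s Hs _ _ q3.
have e2 : [set y in t1 ++ [:: bj]] = bj |: A.
  by rewrite -eA; apply/setP=> y; rewrite !inE mem_cat inE orbC.
have e3 : [set y in t1 ++ [:: bj] ++ [:: bo]] = A12.
  by rewrite /A12 -eA; apply/setP=> y; rewrite !inE !mem_cat !inE; 
     case: (y == bo); case: (y == bj); case: (y \in t1).
rewrite eA in s1; rewrite e2 in s2; rewrite e3 in s3.
rewrite /A12 big_setU1 //= s2 rA12 rj in s3.
rewrite big_setU1 //= s1 rj in s2.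
have xj : (x bj = 0)%R by rewrite /x; lra.
have xo : (x bo = 1)%R by move: s3; rewrite /x -addn1 natrD; lra.
have eo : A :|: ([set e | x e != 0%R] :&: A12) = bo |: A.
  apply/setP=> y; rewrite /A12 !inE.
  case: (eqVneq y bo) => [->|yo]; first by rewrite xo oner_eq0 orbT.
  case: (eqVneq y bj) => [->|yj]; first by rewrite xj eqxx (negbTE bjA).
  by case: (y \in A); rewrite ?andbF.
have boAD : bo |: A \in D by rewrite -eo; apply: (DU HD AD); apply: (DI HD BD A12D).
right; split => //.
have := Hsub _ _ boAD bjAD.
have -> : (bo |: A) :|: (bj |: A) = A12.
  apply/setP=> y; rewrite /A12 !inE.
  by case: (y == bo); case: (y == bj); case: (y \in A).
have -> : (bo |: A) :&: (bj |: A) = A.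
  apply/setP=> y; rewrite !inE.
  case: (eqVneq y bo) => [->|_]; first by rewrite (negbTE boA) eq_sym (negbTE bjo).
  by case: (y == bj); case: (y \in A).
rewrite rA12 rj => hs.
have hu : rho (bo |: A) <= (rho A).+1.
  by case: HU => _ _ _ _ Hu; have := Hu A bo AD boAD; rewrite leq_subLR addnC.
apply/eqP; rewrite eqn_leq hu /=.
by move: hs; rewrite leq_add2r.
Qed.

Theorem theorem7p2 (R : realType) (E : finType) (D : {set {set E}})
    (rho : {set E} -> nat) :
  is_Umatroid D rho ->
  (is_poset_matroid D rho <-> forall B : {set E}, @is_basis R E D rho B -> B \in D).
Proof.
move=> HU; split.
  case=> HD _ _ _ Hloc B [x [Vx ->]].
  have := @supp_tight R E D rho HU Hloc x Vx #|[set: E]| setT (leqnn _) (tightT HU (proj1 Vx)).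
  by rewrite setIT => -[h _].
move=> Hb.
have HU' := HU; case: HU' => HD r0 Hmono Hsub Hunit.
split => // A b1 b2 AD A12D lt.
case: (boolP (b2 \in A)) => b2A.
  have e : b2 |: A = A by apply/setP=> y; rewrite !inE; case: eqP => // ->; rewrite ?b2A ?b1A.
  rewrite e in A12D lt *.
  by left; split => //; apply: (unit_eq HU AD A12D lt).
case: (boolP (b1 \in b2 |: A)) => b1A.
  have e : b1 |: (b2 |: A) = b2 |: A by apply/setP=> y; rewrite in_setU1; case: eqP => // ->; rewrite b1A.
  rewrite e in A12D lt.
  by right; split => //; apply: (unit_eq HU AD A12D lt).
move: (b1A); rewrite !inE negb_or => /andP[b12 b1A'].
have pr : A \proper b1 |: (b2 |: A).
  apply/properP; split; first by apply/subsetP=> y yA; rewrite !inE yA !orbT.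
  by exists b1; rewrite ?inE ?eqxx.
have [f fA fD] := down HD AD A12D pr.
move: fA; rewrite !inE => /andP[fnA /orP[/eqP fb1|/orP[/eqP fb2|]]]; last by rewrite (negbTE fnA).
- have e : (b1 |: (b2 |: A)) :\ f = b2 |: A.
    rewrite fb1; apply/setP=> y; rewrite !inE.
    case: (eqVneq y b1) => [->|_] //=; by rewrite (negbTE b12) (negbTE b1A').
  rewrite e in fD.
  have b21 : b2 != b1 by rewrite eq_sym.
  have := @back_helper R E D rho HU Hb A b2 b1 AD b2A b1A' b21 fD A12D lt.
  by case=> h; [right|left].
- have e : (b1 |: (b2 |: A)) :\ f = b1 |: A.
    rewrite fb2; apply/setP=> y; rewrite !inE.
    case: (eqVneq y b2) => [->|_] //=; by rewrite eq_sym (negbTE b12) (negbTE b2A).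
  rewrite e in fD.
  have e2 : b1 |: (b2 |: A) = b2 |: (b1 |: A) by rewrite setUCA.
  rewrite e2 in A12D lt.
  exact: (@back_helper R E D rho HU Hb A b1 b2 AD b1A' b2A b12 fD A12D lt).
Qed.
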